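(* Let $G$ be an $X-Y$ normalized graph and let $K \neq N(X)$ be an important $X-Y$ separator of $G$. Then $K$ is a compound witness (w.r.t. $X,Y$ in $G$) of rank at most $excess(K)$.
   Context: $G$ is a finite undirected graph, $X,Y$ disjoint subsets of $V(G)$; $N(C)=(\bigcup_{v\in C}N(v))\setminus C$. An $X-Y$ separator is a set $K \subseteq V(G) \setminus (X \cup Y)$ such that $G \setminus K$ has no path from $X$ to $Y$; minimal means inclusion-minimal. A graph $H$ is $X-Y$ normalized if $N(X)$ is the only minimum-cardinality $X-Y$ separator of $H$. In $H$, let $r_H$ be the minimum size of an $X-Y$ separator; the excess of an $X-Y$ separator $K$ is $excess(K)=|K|-r_H$. $NR(H,Y,K)$ is the set of vertices not reachable from $Y$ in $H\setminus K$; $K \geq K'$ means $NR(H,Y,K)\supseteq NR(H,Y,K')$, $K'<K$ means $K\ge K'$ and the $NR$ sets differ. A minimal $X-Y$ separator $K$ is important if there is no $X-Y$ separator $K'$ with $K<K'$ and $|K|\ge |K'|$. For $S\subseteq N(X)$ with no vertex adjacent to $Y$, the cover excess $CE(S)$ is the excess of a smallest $X-Y$ separator disjoint from $S$; a witness of $S$ is an $X-Y$ separator disjoint from $S$ with excess $CE(S)$; in a normalized graph there is a unique witness of $S$ that is an important $X-Y$ separator, denoted $K(S)$. $Pr(H,X,Y,K)$ is the graph obtained from $H\setminus (NR(H,Y,K)\setminus X)$ by making $X$ adjacent to all vertices of $K$. Compound witness: for an $X-Y$ normalized graph $H$, a sequence $(S_1,\dots,S_r)$ of pairwise disjoint non-empty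 vertex sets and an $X-Y$ separator $K$, $K$ is a compound witness of the attribute $(S_1,\dots,S_r)$ w.r.t. $X,Y$ in $H$ if: when $r=1$, $S_1\subseteq N(X)$ and $K=K(S_1)$; when $r>1$, $K(S_1)$ is defined (i.e. $S_1\subseteq N(X)$, not adjacent to $Y$), $S_2\cup\dots\cup S_r$ is disjoint from $N(X)$, and $K$ is a compound witness of $(S_2,\dots,S_r)$ w.r.t. $X,Y$ in $Pr(H,X,Y,K(S_1))$. The rank of such a compound witness is $|S_1|+\dots+|S_r|$. *)

(* Defs.v *)
From mathcomp Require Import all_boot.
Set Implicit Arguments. Unset Strict Implicit. Unset Printing Implicit Defensive.

Section Defs.
Variable V : finType.

(* A finite simple undirected graph: a vertex set [gv] inside the ambient
   finite type V, and an edge relation [ge]; adjacency is the symmetric,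
   irreflexive closure of [ge] restricted to [gv]. *)
Record graph := Graph { gv : {set V}; ge : rel V }.

Definition adj (H : graph) (u v : V) : bool :=
  [&& u \in gv H, v \in gv H, u != v & ge H u v || ge H v u].

Definition nbh (H : graph) (C : {set V}) : {set V} :=
  [set v in gv H | (v \notin C) && [exists u in C, adj H u v]].

Definition adj_minus (H : graph) (K : {set V}) : rel V :=
  [rel u v | [&& adj H u v, u \notin K & v \notin K]].

Definition is_sep (H : graph) (X Y K : {set V}) : bool :=
  (K \subset gv H :\: (X :|: Y)) &&
  [forall x in X, forall y in Y, ~~ connect (adj_minus H K) x y].

Definition is_min_sep (H : graph) (X Y K : {set V}) : bool :=
  is_sep H X Y K && [forall K' : {set V}, (K' \proper K) ==> ~~ is_sep H X Y K'].

Definition rsep (H : graph) (X Y : {set V}) : nat :=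
  \big[minn/#|V|]_(K : {set V} | is_sep H X Y K) #|K|.

Definition excess (H : graph) (X Y K : {set V}) : nat := #|K| - rsep H X Y.

Definition is_minimum_sep (H : graph) (X Y K : {set V}) : Prop :=
  is_sep H X Y K /\ #|K| = rsep H X Y.

Definition normalized (H : graph) (X Y : {set V}) : Prop :=
  is_minimum_sep H X Y (nbh H X) /\
  forall K, is_minimum_sep H X Y K -> K = nbh H X.

Definition NR (H : graph) (Y K : {set V}) : {set V} :=
  [set v in gv H | (v \notin K) &&
     ~~ [exists y in Y, (y \in gv H) && (y \notin K) && connect (adj_minus H K) y v]].

Definition sep_lt (H : graph) (Y K' K : {set V}) : Prop :=
  NR H Y K' \subset NR H Y K /\ NR H Y K' != NR H Y K.

Definition important (H : graph) (X Y K : {set V}) : Prop :=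
  is_min_sep H X Y K /\
  ~ (exists K', is_sep H X Y K' /\ sep_lt H Y K K' /\ #|K'| <= #|K|).

Definition ce_domain (H : graph) (X Y S : {set V}) : bool :=
  (S \subset nbh H X) && [forall s in S, forall y in Y, ~~ adj H s y].

Definition CE (H : graph) (X Y S : {set V}) : nat :=
  \big[minn/#|V|]_(K : {set V} | is_sep H X Y K && [disjoint K & S]) excess H X Y K.

Definition witness (H : graph) (X Y S K : {set V}) : Prop :=
  is_sep H X Y K /\ [disjoint K & S] /\ excess H X Y K = CE H X Y S.

(* "K = K(S)": K is the (unique, in a normalized graph) important witness of S *)
Definition is_KS (H : graph) (X Y S K : {set V}) : Prop :=
  ce_domain H X Y S /\ witness H X Y S K /\ important H X Y K.

Definition Pr (H : graph) (X Y K : {set V}) : graph :=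
  Graph (gv H :\: (NR H Y K :\: X))
        [rel u v | [|| ge H u v, (u \in X) && (v \in K) | (v \in X) && (u \in K)]].

Fixpoint cwit (H : graph) (X Y : {set V}) (ss : seq {set V}) (K : {set V}) : Prop :=
  match ss with
  | [::] => False
  | [:: S1] => normalized H X Y /\ S1 \subset nbh H X /\ is_KS H X Y S1 K
  | S1 :: ss' =>
      normalized H X Y /\
      (exists K1, is_KS H X Y S1 K1 /\
        [disjoint \bigcup_(S <- ss') S & nbh H X] /\
        cwit (Pr H X Y K1) X Y ss' K)
  end.

Definition attribute (ss : seq {set V}) : Prop :=
  all (fun S => S != set0) ss /\ pairwise (fun A B : {set V} => [disjoint A & B]) ss.

Definition compound_witness (H : graph) (X Y : {set V}) (ss : seq {set V}) (K : {set V}) : Prop :=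
  attribute ss /\ cwit H X Y ss K.

Definition rank (ss : seq {set V}) : nat := \sum_(S <- ss) #|S|.

End Defs.

(* Main.v *)
Require Import Defs.
From mathcomp Require Import all_boot zify.
Set Implicit Arguments. Unset Strict Implicit. Unset Printing Implicit Defensive.

Lemma disjP (T : finType) (A B : {set T}) :
  reflect (forall x, x \in A -> x \notin B) [disjoint A & B].
Proof.
rewrite disjoint_subset; apply: (iffP subsetP) => h x xA; first by have := h x xA; rewrite inE.
by rewrite inE h.
Qed.

Lemma bigmin_le_seq (I : eqType) (r : seq I) (P : pred I) (F : I -> nat) d j :
  j \in r -> P j -> \big[minn/d]_(i <- r | P i) F i <= F j.
Proof.
elim: r => // a r IH; rewrite inE big_cons => /orP[/eqP<- | jr] Pj.
  by rewrite Pj geq_minl.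
case: (P a); last exact: IH.
by rewrite geq_min IH ?orbT.
Qed.

Lemma bigmin_le (I : finType) (P : pred I) (F : I -> nat) d j :
  P j -> \big[minn/d]_(i | P i) F i <= F j.
Proof. by move=> Pj; apply: bigmin_le_seq => //; apply: mem_index_enum. Qed.

Lemma bigmin_attained (I : finType) (P : pred I) (F : I -> nat) d j :
  P j -> F j <= d -> exists2 i, P i & \big[minn/d]_(i | P i) F i = F i.
Proof.
move=> Pj Fjd.
have : (\big[minn/d]_(i | P i) F i = d) \/ exists2 i, P i & \big[minn/d]_(i | P i) F i = F i.
  apply: (@big_ind nat (fun x => x = d \/ exists2 i, P i & x = F i)); first by left.
    move=> x y hx hy /=.
    have [->|->] : minn x y = x \/ minn x y = y.
      by case: (leqP x y); [left|right].
    by []. by [].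
  by move=> i Pi; right; exists i.
case=> // e; exists j => //; apply/eqP; rewrite eqn_leq bigmin_le //= e //.
Qed.

Lemma adj_sym V (H : graph V) : symmetric (adj H).
Proof.
move=> u v; rewrite /adj eq_sym orbC.
by case: (u \in gv H); case: (v \in gv H).
Qed.

Lemma adj_minus_sym V (H : graph V) (K : {set V}) : symmetric (adj_minus H K).
Proof.
move=> u v; rewrite /adj_minus /= adj_sym.
by case: (u \in K); case: (v \in K); rewrite /= ?andbF.
Qed.

Lemma conn_sym V (H : graph V) (K : {set V}) x y :
  connect (adj_minus H K) x y = connect (adj_minus H K) y x.
Proof. exact: (sym_connect_sym (adj_minus_sym H K)). Qed.

Lemma adj_gv V (H : graph V) u v : adj H u v -> (u \in gv H) /\ (v \in gv H).
Proof. by case/and4P. Qed.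

Lemma connect_closed_set (T : finType) (e : rel T) (A : {set T}) x y :
  (forall u v, u \in A -> e u v -> v \in A) -> x \in A -> connect e x y -> y \in A.
Proof.
move=> cl xA /connectP[p pth ->]; elim: p x xA pth => //= a p IH x xA /andP[exa pth].
exact: IH (cl _ _ xA exa) pth.
Qed.

Lemma nbhP V (H : graph V) (A : {set V}) v :
  reflect [/\ v \in gv H, v \notin A & exists2 u, u \in A & adj H u v] (v \in nbh H A).
Proof.
rewrite inE; apply: (iffP idP).
  by case/and3P=> g nA /existsP[u /andP[uA a]]; split=> //; exists u.
case=> g nA [u uA a]; rewrite g nA /=; apply/existsP; exists u; by rewrite uA a.
Qed.

Lemma NRP V (H : graph V) (Y K : {set V}) v :
  reflect [/\ v \in gv H, v \notin K &
     forall y, y \in Y -> y \in gv H -> y \notin K -> ~~ connect (adj_minus H K) y v]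
   (v \in NR H Y K).
Proof.
rewrite inE; apply: (iffP idP).
  case/and3P=> g nK /existsPn h; split=> // y yY yg yK.
  by have := h y; rewrite yY yg yK.
case=> g nK h; rewrite g nK /=; apply/existsPn=> y.
by case yY: (y \in Y); case yg: (y \in gv H); case yK: (y \in K); rewrite //= h ?yK.
Qed.

Lemma is_sepP V (H : graph V) (X Y K : {set V}) :
  reflect (K \subset gv H :\: (X :|: Y) /\
           forall x y, x \in X -> y \in Y -> ~~ connect (adj_minus H K) x y)
          (is_sep H X Y K).
Proof.
apply: (iffP andP) => [[s /forallP f]|[s f]]; split=> //.
  by move=> x y xX yY; move: (f x); rewrite xX /= => /forallP/(_ y); rewrite yY.
apply/forallP=> x; apply/implyP=> xX; apply/forallP=> y; apply/implyP=> yY; exact: f.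
Qed.

Definition adm V (H : graph V) (X Y A : {set V}) : bool :=
  [&& X \subset A, A \subset gv H, [disjoint A & Y] & [disjoint nbh H A & Y]].

Lemma nbh_notin V (H : graph V) (A : {set V}) v : v \in nbh H A -> v \notin A.
Proof. by case/nbhP. Qed.

Lemma adm_sep V (H : graph V) (X Y A : {set V}) : adm H X Y A ->
  is_sep H X Y (nbh H A) /\ A \subset NR H Y (nbh H A).
Proof.
case/and4P=> XA Ag AY NY.
have cl : forall u v, u \in A -> adj_minus H (nbh H A) u v -> v \in A.
  move=> u v uA /and3P[a _ vN]; apply/negPn/negP => vnA.
  case: (adj_gv a) => _ vg.
  by move/negP: vN; apply; apply/nbhP; split=> //; exists u.
split.
  apply/is_sepP; split.
    apply/subsetP=> v vN; case/nbhP: (vN) => g nA _.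
    rewrite in_setD in_setU g andbT; apply/norP; split.
      by apply/negP=> vX; move/negP: nA; apply; apply: (subsetP XA).
    by apply/negP=> vY; move/disjP: NY => /(_ v vN); rewrite vY.
  move=> x y xX yY; apply/negP=> c.
  have yA := connect_closed_set cl (subsetP XA _ xX) c.
  by move/disjP: AY => /(_ y yA); rewrite yY.
apply/subsetP=> v vA; apply/NRP; split.
- exact: (subsetP Ag).
- by apply/negP=> /nbh_notin; rewrite vA.
move=> y yY _ _; apply/negP; rewrite conn_sym => c.
have yA := connect_closed_set cl vA c.
by move/disjP: AY => /(_ y yA); rewrite yY.
Qed.

Lemma sep_sub V (H : graph V) (X Y K : {set V}) v : is_sep H X Y K -> v \in K ->
  [/\ v \in gv H, v \notin X & v \notin Y].
Proof.
case/is_sepP=> s _ vK; move: (subsetP s v vK).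
by rewrite in_setD in_setU negb_or => /andP[/andP[nX nY] g].
Qed.

Lemma sep_adm V (H : graph V) (X Y K : {set V}) : X \subset gv H -> is_sep H X Y K ->
  adm H X Y (NR H Y K) /\ nbh H (NR H Y K) \subset K.
Proof.
move=> Xg sK; have [s f] := is_sepP _ _ _ _ sK.
have NK : nbh H (NR H Y K) \subset K.
  apply/subsetP=> v /nbhP[g nR [u uR a]]; apply/negPn/negP=> vK.
  move: nR; rewrite inE g vK /= negbK => /existsP[y /andP[yY /andP[/andP[yg yK] c]]].
  case/NRP: uR => ug uK hu.
  move: (hu y yY yg yK) => /negP; apply; apply: connect_trans c (connect1 _).
  by rewrite /adj_minus /= adj_sym a vK uK.
split=> //; apply/and4P; split.
- apply/subsetP=> x xX; apply/NRP; split.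
  + exact: (subsetP Xg).
  + by apply/negP=> /(sep_sub sK) [_]; rewrite xX.
  + by move=> y yY _ _; rewrite conn_sym; apply: f.
- by apply/subsetP=> v /NRP[].
- apply/disjP=> v /NRP[g nK h]; apply/negP=> vY.
  by have := h v vY g nK; rewrite connect0.
- by apply/disjP=> v /(subsetP NK) /(sep_sub sK) [].
Qed.

Lemma minsep_nbh V (H : graph V) (X Y K : {set V}) : X \subset gv H ->
  is_min_sep H X Y K -> nbh H (NR H Y K) = K.
Proof.
move=> Xg /andP[sK /forallP mK].
have [ad NK] := sep_adm Xg sK.
have [sN _] := adm_sep ad.
apply/eqP; rewrite eqEproper NK /=; apply/negP=> pr.
by move: (mK (nbh H (NR H Y K))); rewrite pr sN.
Qed.

Lemma nbhU_sub V (H : graph V) (A B : {set V}) :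
  nbh H (A :|: B) \subset nbh H A :|: nbh H B.
Proof.
apply/subsetP=> v /nbhP[g]; rewrite in_setU negb_or => /andP[nA nB] [u].
rewrite in_setU => /orP[uA|uB] a; rewrite in_setU; apply/orP.
  by left; apply/nbhP; split=> //; exists u.
by right; apply/nbhP; split=> //; exists u.
Qed.

Lemma nbhI_sub V (H : graph V) (A B : {set V}) :
  nbh H (A :&: B) \subset nbh H A :|: nbh H B.
Proof.
apply/subsetP=> v /nbhP[g nAB [u]]; rewrite in_setI => /andP[uA uB] a.
rewrite in_setU; case vA: (v \in A).
  apply/orP; right; apply/nbhP; split=> //; last by exists u.
  by move: nAB; rewrite in_setI vA.
by apply/orP; left; apply/nbhP; split; rewrite ?vA //; exists u.
Qed.

Lemma nbhUI_sub V (H : graph V) (A B : {set V}) :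
  nbh H (A :|: B) :&: nbh H (A :&: B) \subset nbh H A :&: nbh H B.
Proof.
apply/subsetP=> v; rewrite in_setI => /andP[/nbhP[g]]; rewrite in_setU negb_or.
move=> /andP[nA nB] _ /nbhP[_ _ [u]]; rewrite in_setI => /andP[uA uB] a.
by rewrite in_setI; apply/andP; split; apply/nbhP; split=> //; exists u.
Qed.

Lemma submod V (H : graph V) (A B : {set V}) :
  #|nbh H (A :|: B)| + #|nbh H (A :&: B)| <= #|nbh H A| + #|nbh H B|.
Proof.
rewrite -cardsUI -[#|nbh H A| + _]cardsUI leq_add // subset_leq_card //.
  by rewrite subUset nbhU_sub nbhI_sub.
exact: nbhUI_sub.
Qed.

Lemma admU V (H : graph V) (X Y A B : {set V}) :
  adm H X Y A -> adm H X Y B -> adm H X Y (A :|: B).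
Proof.
case/and4P=> XA Ag AY NA /and4P[XB Bg BY NB]; apply/and4P; split.
- by rewrite subsetU ?XA.
- by rewrite subUset Ag.
- apply/disjP=> v; rewrite in_setU => /orP[] vv.
    exact: (disjP _ _ AY).
  exact: (disjP _ _ BY).
- apply/disjP=> v /(subsetP (nbhU_sub H A B)); rewrite in_setU => /orP[] vv.
    exact: (disjP _ _ NA).
  exact: (disjP _ _ NB).
Qed.

Lemma admI V (H : graph V) (X Y A B : {set V}) :
  adm H X Y A -> adm H X Y B -> adm H X Y (A :&: B).
Proof.
case/and4P=> XA Ag AY NA /and4P[XB Bg BY NB]; apply/and4P; split.
- by rewrite subsetI XA.
- exact: subset_trans (subsetIl A B) Ag.
- apply/disjP=> v; rewrite in_setI => /andP[vA _].
  exact: (disjP _ _ AY).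
- apply/disjP=> v /(subsetP (nbhI_sub H A B)); rewrite in_setU => /orP[] vv.
    exact: (disjP _ _ NA).
  exact: (disjP _ _ NB).
Qed.

Lemma rsep_le V (H : graph V) (X Y Z : {set V}) : is_sep H X Y Z -> rsep H X Y <= #|Z|.
Proof. exact: bigmin_le. Qed.

Lemma rsep_attained V (H : graph V) (X Y Z : {set V}) : is_sep H X Y Z ->
  exists2 Z0, is_sep H X Y Z0 & rsep H X Y = #|Z0|.
Proof. move=> sZ; rewrite /rsep; exact: (bigmin_attained (F := fun K : {set V} => #|K|) sZ (max_card _)). Qed.

Lemma nbhX_in V (H : graph V) (X A : {set V}) v :
  X \subset A -> v \in nbh H X -> v \notin nbh H A -> v \in A.
Proof.
move=> XA /nbhP[g nX [u uX a]] vN; apply/negPn/negP=> vA.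
by move/negP: vN; apply; apply/nbhP; split=> //; exists u => //; apply: (subsetP XA).
Qed.

Lemma in_gvPr V (H : graph V) (X Y J : {set V}) v :
  (v \in gv (Pr H X Y J)) = (v \in gv H) && ((v \notin NR H Y J) || (v \in X)).
Proof.
rewrite /= in_setD in_setD negb_and negbK andbC.
by case: (v \in X); case: (v \in NR H Y J); rewrite ?andbT ?andbF ?orbT.
Qed.

Lemma adjPr_of V (H : graph V) (X Y J : {set V}) u v :
  adj H u v -> u \in gv (Pr H X Y J) -> v \in gv (Pr H X Y J) -> adj (Pr H X Y J) u v.
Proof.
case/and4P=> _ _ ne e ug vg; rewrite /adj ug vg ne /=.
by case/orP: e => e; rewrite e ?orbT.
Qed.

Lemma adjPr_new V (H : graph V) (X Y J : {set V}) x k :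
  x \in X -> k \in J -> x != k -> x \in gv (Pr H X Y J) -> k \in gv (Pr H X Y J) ->
  adj (Pr H X Y J) x k.
Proof. by move=> xX kJ ne xg kg; rewrite /adj xg kg ne /= xX kJ /= orbT. Qed.

Lemma adjPr_inv V (H : graph V) (X Y J : {set V}) u v :
  adj (Pr H X Y J) u v ->
  [/\ u \in gv (Pr H X Y J), v \in gv (Pr H X Y J) &
      adj H u v \/ (u \in X /\ v \in J) \/ (v \in X /\ u \in J)].
Proof.
case/and4P=> ug vg ne e; split=> //.
have [ug' vg'] : (u \in gv H) /\ (v \in gv H).
  by move: ug vg; rewrite !in_gvPr => /andP[-> _] /andP[-> _].
move: e => /= /orP[/or3P[e|/andP[a b]|/andP[a b]] | /or3P[e|/andP[a b]|/andP[a b]]].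
- by left; rewrite /adj ug' vg' ne e.
- by right; left.
- by right; right.
- by left; rewrite /adj ug' vg' ne e orbT.
- by right; right.
- by right; left.
Qed.

Lemma PrN V (H : graph V) (X Y J A : {set V}) x0 :
  X \subset gv H -> x0 \in X -> is_min_sep H X Y J ->
  X \subset A -> A \subset gv (Pr H X Y J) ->
  nbh (Pr H X Y J) A = nbh H (A :|: NR H Y J).
Proof.
move=> Xg x0X mJ XA Ag.
have sJ : is_sep H X Y J by case/andP: mJ.
have NJ := minsep_nbh Xg mJ.
apply/setP=> v; apply/idP/idP.
  case/nbhP=> vg' nA [u uA a].
  have nX : v \notin X by apply/negP=> vX; move/negP: nA; apply; apply: (subsetP XA).
  have [vg nR] : v \in gv H /\ v \notin NR H Y J.
    by move: vg'; rewrite in_gvPr (negbTE nX) orbF => /andP[].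
  apply/nbhP; split=> //; first by rewrite in_setU negb_or nA.
  case: (adjPr_inv a) => _ _ [a'|[[uX vJ]|[vX _]]].
  - by exists u => //; rewrite in_setU uA.
  - have : v \in nbh H (NR H Y J) by rewrite NJ.
    case/nbhP=> _ _ [r rR ar].
    by exists r => //; rewrite in_setU rR orbT.
  - by rewrite vX in nX.
case/nbhP=> vg; rewrite in_setU negb_or => /andP[nA nR] [u].
rewrite in_setU => /orP[uA|uR] a.
  apply/nbhP; split=> //; first by rewrite in_gvPr vg nR.
  exists u => //; apply: adjPr_of a (subsetP Ag _ uA) _.
  by rewrite in_gvPr vg nR.
have sA := sep_adm Xg sJ.
have vJ : v \in J.
  apply: (subsetP sA.2); apply/nbhP; split=> //; by exists u.
have nX : v \notin X by apply/negP=> vX; move/negP: nA; apply; apply: (subsetP XA).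
apply/nbhP; split=> //; first by rewrite in_gvPr vg nR.
exists x0; first exact: (subsetP XA).
apply: adjPr_new => //.
- by apply/negP=> /eqP e; rewrite -e x0X in nX.
- by rewrite in_gvPr x0X orbT andbT; apply: (subsetP Xg).
- by rewrite in_gvPr vg nR.
Qed.

Lemma Pr_gv_sub V (H : graph V) (X Y J : {set V}) : gv (Pr H X Y J) \subset gv H.
Proof. exact: subsetDl. Qed.

Lemma Pr_XY V (H : graph V) (X Y J : {set V}) :
  X \subset gv H -> Y \subset gv H -> is_sep H X Y J ->
  X \subset gv (Pr H X Y J) /\ Y \subset gv (Pr H X Y J).
Proof.
move=> Xg Yg sJ; have [/and4P[_ _ RY _] _] := sep_adm Xg sJ.
split; apply/subsetP=> v vv; rewrite in_gvPr.
  by rewrite vv orbT andbT (subsetP Xg).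
rewrite (subsetP Yg) //=; apply/orP; left; apply/negP=> vR.
by move/disjP: RY => /(_ v vR); rewrite vv.
Qed.

Lemma Pr_admT1 V (H : graph V) (X Y J A : {set V}) x0 :
  X \subset gv H -> x0 \in X -> is_min_sep H X Y J ->
  adm (Pr H X Y J) X Y A -> adm H X Y (A :|: NR H Y J).
Proof.
move=> Xg x0X mJ /and4P[XA Ag AY NA].
have sJ : is_sep H X Y J by case/andP: mJ.
have [/and4P[XR Rg RY NR'] _] := sep_adm Xg sJ.
apply/and4P; split.
- by rewrite subsetU ?XA.
- by rewrite subUset Rg andbT (subset_trans Ag (Pr_gv_sub _ _ _ _)).
- apply/disjP=> v; rewrite in_setU => /orP[] vv.
    exact: (disjP _ _ AY).
  exact: (disjP _ _ RY).
- by rewrite -(PrN Xg x0X mJ XA Ag).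
Qed.

Lemma Pr_admT2 V (H : graph V) (X Y J B : {set V}) x0 :
  X \subset gv H -> x0 \in X -> is_min_sep H X Y J ->
  adm H X Y B -> NR H Y J \subset B ->
  adm (Pr H X Y J) X Y (B :\: (NR H Y J :\: X)) /\
  (B :\: (NR H Y J :\: X)) :|: NR H Y J = B.
Proof.
move=> Xg x0X mJ aB RB.
have eq : (B :\: (NR H Y J :\: X)) :|: NR H Y J = B.
  apply/setP=> v; rewrite in_setU !in_setD.
  case vR: (v \in NR H Y J); case vX: (v \in X); case vB: (v \in B) => //=;
    by rewrite (subsetP RB _ vR) in vB.
split=> //.
case/and4P: aB => XB Bg BY NB.
have XB' : X \subset B :\: (NR H Y J :\: X).
  by apply/subsetP=> v vX; rewrite !inE vX /= (subsetP XB).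
have B'g : B :\: (NR H Y J :\: X) \subset gv (Pr H X Y J) by apply: setSD.
apply/and4P; split=> //.
- apply/disjP=> v; rewrite in_setD => /andP[_ vB]; exact: (disjP _ _ BY).
- by rewrite (PrN Xg x0X mJ XB' B'g) eq.
Qed.

Lemma Pr_nbhX V (H : graph V) (X Y J : {set V}) x0 :
  X \subset gv H -> x0 \in X -> is_min_sep H X Y J ->
  nbh (Pr H X Y J) X = J.
Proof.
move=> Xg x0X mJ.
have sJ : is_sep H X Y J by case/andP: mJ.
have [/and4P[XR _ _ _] _] := sep_adm Xg sJ.
have [XgP _] : X \subset gv (Pr H X Y J) /\ true.
  split=> //; apply/subsetP=> v vv; rewrite in_gvPr vv orbT andbT; exact: (subsetP Xg).
rewrite (PrN Xg x0X mJ (subxx X) XgP); move/setUidPr: XR => ->.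
exact: (minsep_nbh Xg mJ).
Qed.

Lemma sep_disjY V (H : graph V) (X Y J : {set V}) : is_sep H X Y J -> [disjoint J & Y].
Proof. by move=> sJ; apply/disjP=> v /(sep_sub sJ) []. Qed.

Lemma in_B' V (H : graph V) (X Y J B : {set V}) v :
  v \in gv (Pr H X Y J) -> v \in B -> v \in B :\: (NR H Y J :\: X).
Proof.
rewrite in_gvPr in_setD in_setD => /andP[_ h] ->; rewrite andbT.
by case: (v \in X) h; case: (v \in NR H Y J).
Qed.

Lemma Pr_sepW V (H : graph V) (X Y J Z : {set V}) x0 :
  X \subset gv H -> Y \subset gv H -> x0 \in X -> is_min_sep H X Y J ->
  is_sep (Pr H X Y J) X Y Z ->
  let A := NR (Pr H X Y J) Y Z in
  [/\ adm (Pr H X Y J) X Y A, nbh H (A :|: NR H Y J) \subset Z,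
      is_sep H X Y (nbh H (A :|: NR H Y J)),
      A :|: NR H Y J \subset NR H Y (nbh H (A :|: NR H Y J)) &
      adm H X Y (A :|: NR H Y J)].
Proof.
move=> Xg Yg x0X mJ sZ A.
have sJ : is_sep H X Y J by case/andP: mJ.
have [Xg' Yg'] := Pr_XY Xg Yg sJ.
have [aA NA] := sep_adm Xg' sZ.
have aA2 := Pr_admT1 Xg x0X mJ aA.
have [sW WNR] := adm_sep aA2.
case/and4P: (aA) => XA Ag _ _.
by split=> //; rewrite -(PrN Xg x0X mJ XA Ag).
Qed.

Lemma Pr_norm V (H : graph V) (X Y J S : {set V}) x0 :
  X \subset gv H -> Y \subset gv H -> [disjoint X & Y] -> x0 \in X ->
  is_min_sep H X Y J ->
  S \subset NR H Y J ->
  (forall A, adm H X Y A -> S \subset A -> #|J| <= #|nbh H A|) ->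
  (forall A, adm H X Y A -> S \subset A -> #|nbh H A| = #|J| -> A \subset NR H Y J) ->
  normalized (Pr H X Y J) X Y /\ rsep (Pr H X Y J) X Y = #|J|.
Proof.
move=> Xg Yg XY x0X mJ SR opt1 opt2.
have sJ : is_sep H X Y J by case/andP: mJ.
have [Xg' Yg'] := Pr_XY Xg Yg sJ.
have NX := Pr_nbhX Xg x0X mJ.
have admX : adm (Pr H X Y J) X Y X.
  by apply/and4P; split=> //; rewrite NX; apply: sep_disjY sJ.
have sJ' : is_sep (Pr H X Y J) X Y J by have := (adm_sep admX).1; rewrite NX.
have claim : forall Z, is_sep (Pr H X Y J) X Y Z ->
    #|J| <= #|Z| /\ (#|Z| = #|J| -> Z = J).
  move=> Z sZ.
  have [aA WZ _ _ aW] := Pr_sepW Xg Yg x0X mJ sZ.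
  set A := NR (Pr H X Y J) Y Z in aA WZ aW *.
  case/and4P: (aA) => XA Ag _ _.
  have e := PrN Xg x0X mJ XA Ag.
  have SA : S \subset A :|: NR H Y J := subset_trans SR (subsetUr _ _).
  have c1 := opt1 _ aW SA.
  have c2 := subset_leq_card WZ.
  split; first exact: leq_trans c1 c2.
  move=> eZ.
  have eN : #|nbh H (A :|: NR H Y J)| = #|J| by apply/eqP; rewrite eqn_leq c1 -eZ c2.
  have sub := opt2 _ aW SA eN.
  have AX : A \subset X.
    apply/subsetP=> v vA.
    have vR : v \in NR H Y J by apply: (subsetP sub); rewrite in_setU vA.
    by move: (subsetP Ag _ vA); rewrite in_gvPr vR /= => /andP[].
  have Aeq : A = X by apply/eqP; rewrite eqEsubset AX XA.
  have : nbh H (A :|: NR H Y J) = Z.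
    by apply/eqP; rewrite eqEcard WZ eN eZ leqnn.
  by rewrite -e Aeq NX => <-.
have rs : rsep (Pr H X Y J) X Y = #|J|.
  have [Z0 sZ0 e0] := rsep_attained sJ'.
  apply/eqP; rewrite eqn_leq rsep_le //= e0; exact: (claim _ sZ0).1.
split=> //; split.
  by rewrite NX; split.
by move=> Z [sZ eZ]; rewrite NX; apply: (claim _ sZ).2; rewrite eZ.
Qed.

Lemma Pr_imp V (H : graph V) (X Y J K : {set V}) x0 :
  X \subset gv H -> Y \subset gv H -> x0 \in X -> is_min_sep H X Y J ->
  important H X Y K -> NR H Y J \subset NR H Y K ->
  important (Pr H X Y J) X Y K.
Proof.
move=> Xg Yg x0X mJ [mK nimp] RB.
have sJ : is_sep H X Y J by case/andP: mJ.
have sK : is_sep H X Y K by case/andP: mK.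
have [aB _] := sep_adm Xg sK.
have eqB := minsep_nbh Xg mK.
have [aB' eqB'] := Pr_admT2 Xg x0X mJ aB RB.
set B' := NR H Y K :\: (NR H Y J :\: X) in aB' eqB'.
case/and4P: (aB') => XB' B'g _ _.
have NB' : nbh (Pr H X Y J) B' = K by rewrite (PrN Xg x0X mJ XB' B'g) eqB' eqB.
have [sK' B'NR] := adm_sep aB'.
rewrite NB' in sK' B'NR.
split.
  apply/andP; split=> //; apply/forallP=> Z; apply/implyP=> pZ; apply/negP=> sZ.
  have [_ WZ sW _ _] := Pr_sepW Xg Yg x0X mJ sZ.
  have pW := sub_proper_trans WZ pZ.
  by move/andP: mK => [_ /forallP /(_ _) /implyP mK2]; move: (mK2 _ pW); rewrite sW.
case=> K' [sZ [[le ne] c]].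
have [aA WZ sW WNR _] := Pr_sepW Xg Yg x0X mJ sZ.
set A := NR (Pr H X Y J) Y K' in aA WZ sW WNR ne le *.
set W := nbh H (A :|: NR H Y J) in WZ sW WNR.
have BW : NR H Y K \subset NR H Y W.
  rewrite -eqB'; apply: subset_trans WNR; apply: setSU.
  exact: subset_trans B'NR le.
have eqW : NR H Y K = NR H Y W.
  apply/eqP; apply/negPn/negP=> neq; apply: nimp; exists W; split=> //; split.
    by split.
  by apply: leq_trans (subset_leq_card WZ) c.
case/and4P: (aA) => _ Ag _ _.
have AB' : A \subset B'.
  apply/subsetP=> v vA; apply: in_B'; first exact: (subsetP Ag).
  rewrite eqW; apply: (subsetP WNR); by rewrite in_setU vA.
move/negP: ne; apply; rewrite eqEsubset le /=; exact: subset_trans AB' B'NR.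
Qed.

Lemma ar1 a b c : c <= b -> c <= a -> a + b <= c + c -> a = c.
Proof. lia. Qed.

Lemma opt_region V (H : graph V) (X Y S B0 : {set V}) :
  adm H X Y B0 -> S \subset B0 ->
  exists A, [/\ adm H X Y A, S \subset A,
     (forall B, adm H X Y B -> S \subset B -> #|nbh H A| <= #|nbh H B|) &
     (forall B, adm H X Y B -> S \subset B -> #|nbh H B| = #|nbh H A| -> B \subset A)].
Proof.
move=> aB0 SB0.
pose P := fun A : {set V} => adm H X Y A && (S \subset A).
have PB0 : P B0 by rewrite /P aB0.
case: (@arg_minnP _ B0 P (fun A => #|nbh H A|) PB0) => Am /andP[aAm SAm] minAm.
pose Q := fun A : {set V} => [&& adm H X Y A, S \subset A & #|nbh H A| == #|nbh H Am|].
have QAm : Q Am by rewrite /Q aAm SAm eqxx.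
case: (@arg_maxnP _ Am Q (fun A => #|A|) QAm) => As /and3P[aAs SAs /eqP eAs] maxAs.
exists As; split=> //.
  by move=> B aB SB; rewrite eAs; apply: minAm; rewrite /P aB SB.
move=> B aB SB eB.
have aU := admU aB aAs; have aI := admI aB aAs.
have SU : S \subset B :|: As by rewrite subsetU ?SB.
have SI : S \subset B :&: As by rewrite subsetI SB SAs.
have m1 : #|nbh H Am| <= #|nbh H (B :&: As)| by apply: minAm; rewrite /P aI SI.
have m2 : #|nbh H Am| <= #|nbh H (B :|: As)| by apply: minAm; rewrite /P aU SU.
have sm := submod H B As.
have QU : Q (B :|: As).
  rewrite /Q aU SU /=; apply/eqP; move: sm; rewrite eB eAs; exact: ar1.
have := maxAs _ QU => cU.
have e : B :|: As = As.
  by apply/eqP; rewrite eq_sym eqEcard subsetUr /=; exact: cU.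
by rewrite -e subsetUl.
Qed.


Lemma ar2 (b : bool) s r j n : s + r <= j -> j <= n -> n <> j -> b + s + r <= n.
Proof. case: b => /=; lia. Qed.
Lemma ar2b (b : bool) s : b = true -> s >= b + s -> False.
Proof. move=> ->; rewrite /=; lia. Qed.
Lemma ar3 j a z : j <= a -> z < j -> a <= z -> False.
Proof. lia. Qed.
Lemma ar4 j a z r : j <= a -> a <= z -> j - r <= z - r.
Proof. lia. Qed.
Lemma ar5 j i u k : j <= i -> u + i <= j + k -> u <= k.
Proof. lia. Qed.

Lemma set0_sep V (H : graph V) (Y : {set V}) : is_sep H set0 Y set0.
Proof. by apply/is_sepP; split; [apply: sub0set | move=> x y; rewrite inE]. Qed.

Lemma nbh0 V (H : graph V) : nbh H set0 = set0.
Proof. by apply/setP=> v; rewrite in_set0; apply/negP=> /nbhP[_ _ [u]]; rewrite in_set0. Qed.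

Lemma step V (H : graph V) (X Y K : {set V}) :
  X \subset gv H -> Y \subset gv H -> [disjoint X & Y] ->
  normalized H X Y -> important H X Y K -> K != nbh H X ->
  exists x0, x0 \in X /\
  exists S J : {set V}, [/\ S \subset nbh H X, S != set0, [disjoint S & K], S \subset NR H Y J & is_KS H X Y S J]
    /\ (forall A, adm H X Y A -> S \subset A -> #|J| <= #|nbh H A|)
    /\ (forall A, adm H X Y A -> S \subset A -> #|nbh H A| = #|J| -> A \subset NR H Y J)
    /\ NR H Y J \subset NR H Y K
    /\ #|S| + rsep H X Y <= #|J| /\ #|J| <= #|K|
    /\ (forall v, v \in nbh H X -> v \notin K -> v \in NR H Y J).
Proof.
move=> Xg Yg XY [[sN rN] uN] [mK nimp] KN.
have sK : is_sep H X Y K by case/andP: mK.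
have [X0 | [x0 x0X]] := set_0Vmem X.
  exfalso; move: KN mK; rewrite X0 nbh0 => KN /andP[_ /forallP /(_ set0)].
  by rewrite proper0 KN set0_sep.
set N := nbh H X in sN rN uN KN *.
set r := rsep H X Y in rN *.
exists x0; split=> //.
have [NK | /subsetPn [s sNs sKs]] := boolP (N \subset K).
  exfalso; have pNK : N \proper K by rewrite properEneq NK andbT eq_sym.
  have := mK; move/andP => [_ /forallP /(_ N) /implyP h].
  by move: (h pNK); rewrite sN.
have [aBK NBK] := sep_adm Xg sK.
have eqBK := minsep_nbh Xg mK.
have DBK : forall v, v \in N -> v \notin K -> v \in NR H Y K.
  move=> v vN vK; apply: nbhX_in vN _; first by case/and4P: aBK.
  by rewrite eqBK.
pose D := N :\: K.
pose PS := fun S : {set V} => [&& S \subset D, S != set0 &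
   [forall A, adm H X Y A && (S \subset A) ==> (#|S| + r <= #|nbh H A|)]].
have lowr : forall A, adm H X Y A -> r <= #|nbh H A|.
  by move=> A aA; apply: rsep_le; case: (adm_sep aA).
have Ps : PS [set s].
  apply/and3P; split.
  - by rewrite sub1set in_setD sKs sNs.
  - by apply/set0Pn; exists s; rewrite inE.
  - apply/forallP=> A; apply/implyP=> /andP[aA]; rewrite sub1set cards1 add1n => sA.
    have := lowr _ aA; rewrite leq_eqVlt => /orP[/eqP e|] //.
    have [sA' _] := adm_sep aA.
    have eN : nbh H A = N by apply: uN; split.
    have sN' : s \in nbh H A by rewrite eN.
    by move: (nbh_notin sN'); rewrite sA.
case: (@arg_maxnP _ [set s] PS (fun S => #|S|) Ps) => S /and3P[SD S0 /forallP Sbnd] maxS.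
have SN : S \subset N := subset_trans SD (subsetDl N K).
have SK : [disjoint S & K].
  by apply/disjP => v /(subsetP SD); rewrite in_setD => /andP[].
have SBK : S \subset NR H Y K.
  by apply/subsetP => v /(subsetP SD); rewrite in_setD => /andP[vK vN]; exact: DBK.
have [As [aAs SAs minAs maxAs]] := opt_region aBK SBK.
move eJ : (nbh H As) => J; rewrite eJ in minAs maxAs.
have bndS : #|S| + r <= #|J| by have := Sbnd As; rewrite aAs SAs eJ.
have DAs : forall v, v \in N -> v \notin K -> v \in As.
  move=> t tN tK; apply/negPn/negP => tA.
  have tS : t \notin S by apply/negP => /(subsetP SAs); rewrite (negbTE tA).
  have PS' : PS (t |: S).
    apply/and3P; split.
    - by rewrite subUset sub1set in_setD tK tN SD.
    - by apply/set0Pn; exists t; rewrite in_setU1 eqxx.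
    - apply/forallP=> A; apply/implyP=> /andP[aA]; rewrite subUset sub1set => /andP[tA' SA].
      rewrite cardsU1 tS.
      have h1 := minAs _ aA SA.
      have h2 : #|nbh H A| <> #|J|.
        by move=> e; move: (subsetP (maxAs _ aA SA e) _ tA'); rewrite (negbTE tA).
      exact: ar2 bndS h1 h2.
  have := maxS _ PS'; rewrite cardsU1 tS; exact: ar2b.
have [sJ AsNR] := adm_sep aAs; rewrite eJ in sJ AsNR.
have [aNRJ NNRJ] := sep_adm Xg sJ.
have SNRJ : S \subset NR H Y J := subset_trans SAs AsNR.
have eqAs : NR H Y J = As.
  apply/eqP; rewrite eqEsubset AsNR andbT.
  apply: (maxAs _ aNRJ SNRJ); apply/eqP; rewrite eqn_leq (subset_leq_card NNRJ) /=.
  exact: (minAs _ aNRJ SNRJ).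
have SinNR : forall Z, is_sep H X Y Z -> [disjoint S & Z] -> S \subset NR H Y Z.
  move=> Z sZ dZ; have [aZ NZ] := sep_adm Xg sZ; apply/subsetP=> v vS.
  apply: nbhX_in (subsetP SN _ vS) _; first by case/and4P: aZ.
  by apply/negP=> /(subsetP NZ); move/disjP: dZ => /(_ v vS) /negbTE ->.
have dJS : [disjoint S & J].
  by apply/disjP=> v vS; apply/negP; rewrite -eJ => /nbh_notin; rewrite (subsetP SAs _ vS).
have mJ : is_min_sep H X Y J.
  apply/andP; split=> //; apply/forallP=> Z; apply/implyP=> pZ; apply/negP=> sZ.
  have dZ : [disjoint S & Z].
    apply/disjP=> v vS; apply/negP=> vZ; move: (disjP _ _ dJS v vS).
    by rewrite (subsetP (proper_sub pZ) _ vZ).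
  have [aZ NZ] := sep_adm Xg sZ.
  exact: ar3 (minAs _ aZ (SinNR _ sZ dZ)) (proper_card pZ) (subset_leq_card NZ).
have impJ : important H X Y J.
  split=> //; case=> K' [sK' [[le ne] c]].
  have [aK' NK'] := sep_adm Xg sK'.
  have SK' : S \subset NR H Y K' := subset_trans SNRJ le.
  have e : #|nbh H (NR H Y K')| = #|J|.
    apply/eqP; rewrite eqn_leq (leq_trans (subset_leq_card NK') c) /=; exact: minAs.
  have := maxAs _ aK' SK' e; rewrite -eqAs => sub.
  by move/negP: ne; apply; rewrite eqEsubset le sub.
have wit : witness H X Y S J.
  split=> //; split; first by rewrite disjoint_sym.
  rewrite /CE.
  have lb : forall Z, is_sep H X Y Z && [disjoint Z & S] -> excess H X Y J <= excess H X Y Z.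
    move=> Z /andP[sZ dZ]; rewrite disjoint_sym in dZ; have [aZ NZ] := sep_adm Xg sZ.
    rewrite /excess -/r; exact: ar4 (minAs _ aZ (SinNR _ sZ dZ)) (subset_leq_card NZ).
  have PJ : is_sep H X Y J && [disjoint J & S] by rewrite sJ disjoint_sym dJS.
  have bl := @bigmin_le _ (fun K => is_sep H X Y K && [disjoint K & S]) (fun Z => excess H X Y Z) #|V| J PJ.
  have [Z PZ eZ] := @bigmin_attained _ (fun K => is_sep H X Y K && [disjoint K & S]) (fun Z => excess H X Y Z) #|V| J PJ
                      (leq_trans (leq_subr _ _) (max_card _)).
  rewrite eZ in bl *; apply/eqP; rewrite eqn_leq bl andbT; exact: lb Z PZ.
have ce : ce_domain H X Y S.
  apply/andP; split=> //; apply/forallP=> v; apply/implyP=> vS; apply/forallP=> y.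
  apply/implyP=> yY; apply/negP=> a.
  have vAs := subsetP SAs _ vS.
  case/and4P: (aAs) => _ _ AsY; rewrite eJ => NAsY.
  have yA : y \notin As by apply/negP => yA; move: (disjP _ _ AsY _ yA); rewrite yY.
  have yJ : y \in J by rewrite -eJ; apply/nbhP; split => //; [by case: (adj_gv a) | by exists v].
  by move: (disjP _ _ NAsY _ yJ); rewrite yY.
have JK : NR H Y J \subset NR H Y K.
  rewrite eqAs.
  have aI := admI aAs aBK; have aU := admU aAs aBK.
  have SI : S \subset As :&: NR H Y K by rewrite subsetI SAs SBK.
  have m1 := minAs _ aI SI.
  have sm := submod H As (NR H Y K).
  have [sW WNR] := adm_sep aU.
  have eqW : NR H Y K = NR H Y (nbh H (As :|: NR H Y K)).
    apply/eqP; apply/negPn/negP=> neq; apply: nimp; exists (nbh H (As :|: NR H Y K)).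
    split=> //; split.
      split=> //; exact: subset_trans (subsetUr As _) WNR.
    suff : #|nbh H (As :|: NR H Y K)| <= #|nbh H (NR H Y K)| by rewrite eqBK.
    by move: sm; rewrite eJ; exact: ar5 m1.
  rewrite eqW; exact: subset_trans (subsetUl As _) WNR.
exists S, J; split.
  by split=> //; split.
split; first exact: minAs.
split; first by move=> A aA SA e; rewrite eqAs; exact: maxAs.
split; first exact: JK.
split; first exact: bndS.
split.
  suff : #|J| <= #|nbh H (NR H Y K)| by rewrite eqBK.
  exact: minAs.
by move=> v vN vK; rewrite eqAs; exact: DAs.
Qed.

Lemma ar6 s r j k n : 1 <= s -> s + r <= j -> j <= k -> k - r < n.+1 -> k - j < n.
Proof. lia. Qed.
Lemma ar7 s r j k x : s + r <= j -> j <= k -> x <= k - j -> s + x <= k - r.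
Proof. lia. Qed.
Lemma ar8 s r k : s + r <= k -> s <= k - r.
Proof. lia. Qed.

Lemma bigcup_seqP V (s : seq {set V}) v :
  v \in \bigcup_(T <- s) T -> exists2 T, T \in s & v \in T.
Proof.
elim: s => [|T s IH]; first by rewrite big_nil inE.
rewrite big_cons in_setU => /orP[vT|/IH [T' T's vT']].
  by exists T; rewrite ?inE ?eqxx.
by exists T'; rewrite // inE T's orbT.
Qed.

Lemma rank_cons V (S : {set V}) ss : rank (S :: ss) = #|S| + rank ss.
Proof. by rewrite /rank big_cons. Qed.

Lemma main V (X Y : {set V}) n : forall (H : graph V) (K : {set V}),
  #|K| - rsep H X Y < n ->
  X \subset gv H -> Y \subset gv H -> [disjoint X & Y] ->
  normalized H X Y -> important H X Y K -> K != nbh H X ->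
  exists ss : seq {set V},
    [/\ compound_witness H X Y ss K, rank ss <= excess H X Y K &
        all (fun S : {set V} => (S \subset gv H) && [disjoint S & K]) ss].
Proof.
elim: n => // n IH H K lt Xg Yg XY nH iK KN.
have [x0 [x0X [S [J [[SN S0 SK SJ KS] [opt1 [opt2 [JK [bnd [JleK DJ]]]]]]]]]] :=
  step Xg Yg XY nH iK KN.
have [_ [wJ iJ]] := KS.
have mJ : is_min_sep H X Y J := iJ.1.
have sJ : is_sep H X Y J by case/andP: mJ.
have Sg : S \subset gv H.
  by apply: subset_trans SN _; apply/subsetP=> v /nbhP[].
have S1 : 1 <= #|S| by rewrite card_gt0.
case: (eqVneq J K) => [eJK | nJK].
  exists [:: S]; split.
  - split; first by split; rewrite /= ?S0.
    by split=> //; split=> //; rewrite -eJK.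
  - by rewrite /rank big_cons big_nil addn0 /excess; apply: ar8; rewrite -eJK.
  - by rewrite /= Sg SK.
have [nH' rH'] := Pr_norm Xg Yg XY x0X mJ SJ opt1 opt2.
have iK' := Pr_imp Xg Yg x0X mJ iK JK.
have [Xg' Yg'] := Pr_XY Xg Yg sJ.
have NX' := Pr_nbhX Xg x0X mJ.
have KN' : K != nbh (Pr H X Y J) X by rewrite NX' eq_sym.
have lt' : #|K| - rsep (Pr H X Y J) X Y < n by rewrite rH'; exact: ar6 S1 bnd JleK lt.
have [ss [[[att1 att2] cw] rk allss]] := IH _ K lt' Xg' Yg' XY nH' iK' KN'.
have Snot : forall v, v \in S -> v \notin gv (Pr H X Y J).
  move=> v vS; have vX : v \notin X by case/nbhP: (subsetP SN _ vS).
  by rewrite in_gvPr (subsetP SJ _ vS) (negbTE vX) andbF.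
have allss' : forall T, T \in ss -> (T \subset gv (Pr H X Y J)) /\ [disjoint T & K].
  by move=> T Ts; move/allP: allss => /(_ T Ts) /andP[].
exists (S :: ss); split.
- split.
    split; first by rewrite /= S0 att1.
    rewrite /= att2 andbT; apply/allP=> T Ts; apply/disjP=> v vS.
    have [Tg _] := allss' T Ts.
    by apply/negP=> vT; move: (Snot v vS); rewrite (subsetP Tg _ vT).
  case: ss att1 att2 cw rk allss allss' => [|T ss0] // att1 att2 cw rk allss allss'.
  split=> //; exists J; split=> //; split=> //.
  apply/disjP=> v /bigcup_seqP [T' T's vT']; apply/negP=> vN.
  have [Tg dT] := allss' T' T's.
  have vK : v \in K.
    apply/negPn/negP=> vK.
    have vR := DJ v vN vK.
    have vX : v \notin X by case/nbhP: vN.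
    by move: (subsetP Tg _ vT'); rewrite in_gvPr vR (negbTE vX) andbF.
  by move: (disjP _ _ dT v vT'); rewrite vK.
- rewrite rank_cons /excess; move: rk; rewrite /excess rH'; exact: ar7 bnd JleK.
- rewrite /= Sg SK /=; apply/allP=> T Ts; have [Tg dT] := allss' T Ts.
  by rewrite dT andbT (subset_trans Tg (Pr_gv_sub _ _ _ _)).
Qed.

Theorem theorem2 (V : finType) (G : graph V) (X Y K : {set V}) :
  X \subset gv G -> Y \subset gv G -> [disjoint X & Y] ->
  normalized G X Y ->
  important G X Y K ->
  K != nbh G X ->
  exists ss : seq {set V},
    compound_witness G X Y ss K /\ rank ss <= excess G X Y K.
Proof.
move=> Xg Yg XY nG iK KN.
have [ss [cw rk _]] := main (n := (#|K| - rsep G X Y).+1) (leqnn _) Xg Yg XY nG iK KN.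
by exists ss.
Qed.
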